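(* The SRT-definable transformations are not closed under composition: there exist a linear group $\mathbf{G}=(D,\leq,+)$, finite label sets $\Sigma,\Gamma,\Theta$, a $(\Sigma,\Gamma,\mathbf{G})$-SRT $\mathcal{S}_1$ and a $(\Gamma,\Theta,\mathbf{G})$-SRT $\mathcal{S}_2$ such that the composition $[\![\mathcal{S}_1]\!]\cdot[\![\mathcal{S}_2]\!]$ is not equal to $[\![\mathcal{S}]\!]$ for any $(\Sigma,\Theta,\mathbf{G})$-SRT $\mathcal{S}$.
   Context: A linear group is a triple $\mathbf{G}=(D,\leq,+)$ where $D$ is an infinite set, $\leq$ is a total order on $D$, and $(D,+)$ is a group with identity $0$. For finite label sets $\Sigma$ (input) and $\Gamma$ (output), a $(\Sigma,\Gamma,\mathbf{G})$-streaming register transducer (SRT) is a tuple $\mathcal{S}=(Q,q_0,k,R_0,\Delta)$ where $Q$ is a finite set of states, $q_0\in Q$, $k\in\mathbb{N}$ is the number of registers, $R_0\in D^k$ gives the initial register values, and $\Delta\subseteq Q\times\Sigma\times\{>,=,<\}^k\times\{\mathsf{old},\mathsf{new},\mathsf{add}\}^k\times\{1,\dots,k\}\times\Gamma\times Q$ is a finite set of transitions. A configuration is a pair $(q,R)$ with $q\in Q$, $R\in D^k$. A transition $(q,\sigma,l,m,u,\gamma,q')$ enables the step $(q,R)\xrightarrow[(\gamma,d')]{(\sigma,d)}(q',R')$ iff (1) for every $i$, $d>R[i]$, $d=R[i]$ or $d<R[i]$ according as $l[i]$ is $>$, $=$ or $<$; (2) for every $i$, $R'[i]=R[i]$ if $m[i]=\mathsf{old}$,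 $R'[i]=d$ if $m[i]=\mathsf{new}$, $R'[i]=R[i]+d$ if $m[i]=\mathsf{add}$; (3) $d'=R'[u]$. A run over a finite data word $s\in(\Sigma\times D)^*$ of length $n$ generating $t\in(\Gamma\times D)^*$ is a sequence of $n$ steps from $(q_0,R_0)$, the $i$-th reading $s[i]$ and emitting $t[i]$, each enabled by a transition of $\Delta$. For words $s,t$ of equal length, $s\otimes t$ is the word with $i$-th letter $(s[i],t[i])$. $[\![\mathcal{S}]\!]=\{s\otimes t:\text{there is a run over }s\text{ generating }t\}$. For a set $\mathcal{T}_1$ of words over $(\Sigma\times D)\times(\Gamma\times D)$ and a set $\mathcal{T}_2$ of words over $(\Gamma\times D)\times(\Theta\times D)$, the composition $\mathcal{T}_1\cdot\mathcal{T}_2$ is the set of all $s_1\otimes s_2$ with $s_1\in(\Sigma\times D)^*$, $s_2\in(\Theta\times D)^*$ such that there exists $s_3\in(\Gamma\times D)^*$ with $s_1\otimes s_3\in\mathcal{T}_1$ and $s_3\otimes s_2\in\mathcal{T}_2$. *)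

(* Defs.v *)
From mathcomp Require Import all_boot.
From Stdlib Require List.
Set Implicit Arguments. Unset Strict Implicit. Unset Printing Implicit Defensive.

(* A linear group (D, <=, +): D infinite, <= a total order, (D,+) a group
   (not assumed commutative, and no compatibility between order and group). *)
Record linear_group := LinearGroup {
  lg_D : Type;
  lg_le : lg_D -> lg_D -> Prop;
  lg_add : lg_D -> lg_D -> lg_D;
  lg_zero : lg_D;
  lg_opp : lg_D -> lg_D;
  lg_infinite : ~ (exists l : list lg_D, forall x, List.In x l);
  lg_le_refl : forall x, lg_le x x;
  lg_le_antisym : forall x y, lg_le x y -> lg_le y x -> x = y;
  lg_le_trans : forall x y z, lg_le x y -> lg_le y z -> lg_le x z;
  lg_le_total : forall x y, lg_le x y \/ lg_le y x;
  lg_addA : forall x y z, lg_add x (lg_add y z) = lg_add (lg_add x y) z;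
  lg_add0l : forall x, lg_add lg_zero x = x;
  lg_add0r : forall x, lg_add x lg_zero = x;
  lg_addNl : forall x, lg_add (lg_opp x) x = lg_zero;
  lg_addNr : forall x, lg_add x (lg_opp x) = lg_zero
}.

Definition lg_lt (G : linear_group) (x y : lg_D G) : Prop :=
  @lg_le G x y /\ x <> y.

Inductive cmp := CmpGt | CmpEq | CmpLt.
Inductive upd := UpdOld | UpdNew | UpdAdd.

(* A transition (q, sigma, l, m, u, gamma, q'); u ranges over the k registers. *)
Record transition (Sigma Gamma Q : Type) (k : nat) := Transition {
  t_src : Q;
  t_in : Sigma;
  t_cmp : 'I_k -> cmp;
  t_upd : 'I_k -> upd;
  t_out : 'I_k;
  t_lab : Gamma;
  t_dst : Q
}.

Record srt (Sigma Gamma : finType) (G : linear_group) := SRT {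
  srt_Q : finType;
  srt_q0 : srt_Q;
  srt_k : nat;
  srt_R0 : 'I_srt_k -> lg_D G;
  srt_delta : seq (transition Sigma Gamma srt_Q srt_k)
}.

Definition cmp_holds (G : linear_group) (c : cmp) (d r : lg_D G) : Prop :=
  match c with
  | CmpGt => lg_lt r d
  | CmpEq => d = r
  | CmpLt => lg_lt d r
  end.

Definition upd_val (G : linear_group) (m : upd) (r d : lg_D G) : lg_D G :=
  match m with
  | UpdOld => r
  | UpdNew => d
  | UpdAdd => @lg_add G r d
  end.

Definition enables (Sigma Gamma Q : Type) (G : linear_group) (k : nat)
  (tr : transition Sigma Gamma Q k)
  (q : Q) (R : 'I_k -> lg_D G) (a : Sigma * lg_D G) (b : Gamma * lg_D G)
  (q' : Q) (R' : 'I_k -> lg_D G) : Prop :=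
  t_src tr = q /\ t_in tr = a.1 /\ t_lab tr = b.1 /\ t_dst tr = q' /\
  (forall i, @cmp_holds G (t_cmp tr i) a.2 (R i)) /\
  (forall i, R' i = @upd_val G (t_upd tr i) (R i) a.2) /\
  b.2 = R' (t_out tr).

Fixpoint runs_from (Sigma Gamma : finType) (G : linear_group)
  (S : srt Sigma Gamma G) (q : srt_Q S) (R : 'I_(srt_k S) -> lg_D G)
  (w : seq ((Sigma * lg_D G) * (Gamma * lg_D G))) : Prop :=
  match w with
  | [::] => True
  | (a, b) :: w' =>
      exists tr q' R', List.In tr (srt_delta S) /\
        @enables Sigma Gamma (srt_Q S) G (srt_k S) tr q R a b q' R' /\ @runs_from Sigma Gamma G S q' R' w'
  end.

Definition srt_sem (Sigma Gamma : finType) (G : linear_group)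
  (S : srt Sigma Gamma G) (w : seq ((Sigma * lg_D G) * (Gamma * lg_D G))) : Prop :=
  @runs_from Sigma Gamma G S (srt_q0 S) (@srt_R0 Sigma Gamma G S) w.

Definition tensor (A B : Type) (s : seq A) (t : seq B) : seq (A * B) := zip s t.

Definition compose_tr (A B C : Type)
  (T1 : seq (A * B) -> Prop) (T2 : seq (B * C) -> Prop) (w : seq (A * C)) : Prop :=
  exists (s1 : seq A) (s2 : seq C) (s3 : seq B),
    [/\ size s1 = size s2, size s3 = size s1, w = tensor s1 s2,
        T1 (tensor s1 s3) & T2 (tensor s3 s2)].

(* Main.v *)
Require Import Defs.
From mathcomp Require Import all_boot.
From mathcomp Require Import zify.
From Stdlib Require Import ZArith Lia List.

Open Scope Z_scope.

Lemma fold_abs_bound (l : list Z) x :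
  List.In x l -> Z.abs x <= List.fold_right (fun y a => Z.abs y + a) 0 l.
Proof.
  induction l as [|y l IH]; simpl; [tauto|].
  intros [->|H].
  - assert (0 <= List.fold_right (fun y a => Z.abs y + a) 0 l).
    { clear IH. induction l; simpl; lia. }
    lia.
  - specialize (IH H). pose proof (Z.abs_nonneg y). lia.
Qed.

Lemma Z_infinite : ~ (exists l : list Z, forall x, List.In x l).
Proof.
  intros [l Hl].
  set M := List.fold_right (fun y a => Z.abs y + a) 0 l.
  pose proof (fold_abs_bound l (M + 1) (Hl _)).
  assert (0 <= M).
  { unfold M; clear. induction l; simpl; lia. }
  fold M in H. lia.
Qed.

Definition ZG : linear_group.
Proof.
  refine {| lg_D := Z; lg_le := Z.le; lg_add := Z.add; lg_zero := 0;
            lg_opp := Z.opp; lg_infinite := Z_infinite |}; intros; lia.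
Defined.

Definition mktr (c : cmp) : transition unit unit unit 1 :=
  {| t_src := tt; t_in := tt; t_cmp := fun _ => c; t_upd := fun _ => UpdAdd;
     t_out := ord0; t_lab := tt; t_dst := tt |}.

Definition Sadd : srt unit unit ZG :=
  @SRT unit unit ZG unit tt 1 (fun _ => (0 : lg_D ZG))
     [:: mktr CmpGt; mktr CmpEq; mktr CmpLt].

Lemma sum_bound k (f : 'I_k -> nat) i : (f i <= \sum_(j < k) f j)%nat.
Proof. rewrite (bigD1 i) //=; apply leq_addr. Qed.

Lemma final_contra (N r : Z) (u1 u2 : upd) : 0 < N -> Z.abs r < N ->
  N + N = @upd_val ZG u2 (@upd_val ZG u1 r N) 0 -> False.
Proof. case: u1; case: u2; simpl; intros; lia. Qed.

Theorem theorem3p14 :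
  exists (G : linear_group) (Sigma Gamma Theta : finType)
         (S1 : srt Sigma Gamma G) (S2 : srt Gamma Theta G),
    forall S : srt Sigma Theta G,
      ~ (forall w, compose_tr (srt_sem S1) (srt_sem S2) w <-> srt_sem S w).
Proof.
  exists ZG, unit, unit, unit, Sadd, Sadd.
  intros S HS.
  set N : Z := 1 + Z.of_nat (\sum_(j < srt_k S) Z.abs_nat (@srt_R0 _ _ _ S j)).
  assert (HN : forall j, Z.abs (@srt_R0 _ _ _ S j) < N).
  { intro j. pose proof (@sum_bound _ (fun j => Z.abs_nat (@srt_R0 _ _ _ S j)) j) as H.
    unfold N. cbv beta in H. lia. }
  assert (HN0 : 0 < N) by (unfold N; lia).
  set w := [:: ((tt, N), (tt, N)); ((tt, 0), (tt, N + N))]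
           : seq.seq ((unit * lg_D ZG) * (unit * lg_D ZG))%type.
  assert (Hc : compose_tr (srt_sem Sadd) (srt_sem Sadd) w).
  { exists [:: (tt, N); (tt, 0)], [:: (tt, N); (tt, N + N)], [:: (tt, N); (tt, N)].
    split; try reflexivity.
    - exists (mktr CmpGt), tt, (fun _ => N). split; [simpl; tauto|].
      split.
      + repeat split; simpl; try (intros; lia); intros [] ; simpl; lia.
      + exists (mktr CmpLt), tt, (fun _ => N). split; [simpl; tauto|].
        split; [|exact I].
        repeat split; simpl; try (intros; lia); intros [] ; simpl; lia.
    - exists (mktr CmpGt), tt, (fun _ => N). split; [simpl; tauto|].
      split.
      + repeat split; simpl; try (intros; lia); intros [] ; simpl; lia.
      + exists (mktr CmpEq), tt, (fun _ => N + N). split; [simpl; tauto|].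
        split; [|exact I].
        repeat split; simpl; try (intros; lia); intros [] ; simpl; lia. }
  apply HS in Hc.
  destruct Hc as (tr1 & q1 & R1 & _ & (_ & _ & _ & _ & _ & HR1 & _) &
                  tr2 & q2 & R2 & _ & (_ & _ & _ & _ & _ & HR2 & Hout) & _).
  simpl in Hout. rewrite HR2 HR1 in Hout.
  pose proof (HN (t_out tr2)) as Hb.
  eapply final_contra; [exact HN0|exact (HN (t_out tr2))|]. exact Hout.
Qed.
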